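(* If a symmetric restaking network $G$ admits a profitable attack, then it admits a profitable attack that is consolidated.
   Context: A restaking network is a tuple $G=(V,S,\sigma,w,\theta,\pi)$ with finite nonempty validator set $V$, finite service set $S$, stake $\sigma:V\to\mathbb{R}_{>0}$, allocation $w:V\times S\to\mathbb{R}_{\ge0}$ with $w(v,s)\le\sigma(v)$, thresholds $\theta:S\to[0,1]$, prizes $\pi:S\to\mathbb{R}_{>0}$. An attack is $\alpha:V\times S\to\mathbb{R}_{\ge0}$ with $\alpha(v,s)\le w(v,s)$; attacked services $S_\alpha=\{s:\sum_v\alpha(v,s)\ge\theta(s)\sum_v w(v,s)\}$; validator cost $c_v(\alpha)=\min(\sigma(v),\sum_{s\in S_\alpha}\alpha(v,s))$; total cost $C(\alpha)=\sum_vc_v(\alpha)$; prize $\Pi(\alpha)=\sum_{s\in S_\alpha}\pi(s)$. Profitable: $S_\alpha\ne\emptyset$ and $C(\alpha)\le\Pi(\alpha)$. $G$ is symmetric if all validators have the same stake $\sigma$, for each $s$ all validators have the same allocation $w(s)$, and all services have the same threshold $\theta$. Let $m=|V|$ and $V=\{v_1,\dots,v_m\}$ (any ordering). An attack is consolidated if for every $s\in S_\alpha$ and $i\in\{1,\dots,m\}$: $\alpha(v_i,s)=w(s)$ if $i\le\lfloor\theta m\rfloor$; $\alpha(v_i,s)=(\theta m-\lfloor\theta m\rfloor)w(s)$ if $i=\lfloor\theta m\rfloor+1$; $\alpha(v_i,s)=0$ otherwise. *)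

(* Defs.v *)
From mathcomp Require Import all_boot all_order all_algebra.
From mathcomp Require Import reals.
Set Implicit Arguments. Unset Strict Implicit. Unset Printing Implicit Defensive.
Import Order.TTheory GRing.Theory Num.Theory.
Local Open Scope ring_scope.

Section Restaking.
Variables (R : realType) (V S : finType).

Definition is_network (sigma : V -> R) (w : V -> S -> R) (theta : S -> R)
    (pi : S -> R) : Prop :=
  [/\ (0 < #|V|)%N,
      (forall v, 0 < sigma v),
      (forall v s, 0 <= w v s /\ w v s <= sigma v),
      (forall s, 0 <= theta s /\ theta s <= 1) &
      (forall s, 0 < pi s)].

Definition is_attack (w : V -> S -> R) (alpha : V -> S -> R) : Prop :=
  forall v s, 0 <= alpha v s /\ alpha v s <= w v s.

Definition attacked (w : V -> S -> R) (theta : S -> R) (alpha : V -> S -> R)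
    : {set S} :=
  [set s | theta s * (\sum_v w v s) <= \sum_v alpha v s].

Definition vcost (sigma : V -> R) (w : V -> S -> R) (theta : S -> R)
    (alpha : V -> S -> R) (v : V) : R :=
  Num.min (sigma v) (\sum_(s in attacked w theta alpha) alpha v s).

Definition cost sigma w theta alpha : R := \sum_v vcost sigma w theta alpha v.

Definition prize (w : V -> S -> R) theta (pi : S -> R) alpha : R :=
  \sum_(s in attacked w theta alpha) pi s.

Definition profitable sigma w theta pi alpha : Prop :=
  attacked w theta alpha != set0 /\
  cost sigma w theta alpha <= prize w theta pi alpha.

Definition symmetric_net (sigma : V -> R) (w : V -> S -> R) (theta : S -> R)
    (sg : R) (ws : S -> R) (th : R) : Prop :=
  [/\ (forall v, sigma v = sg), (forall v s, w v s = ws s) &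
      (forall s, theta s = th)].

(* consolidated w.r.t. the ordering e : 'I_m -> V (v_{i+1} = e i, 0-based),
   m = #|V|; ws, th as in [symmetric]. *)
Definition consolidated (w : V -> S -> R) (theta : S -> R) (ws : S -> R)
    (th : R) (e : 'I_#|V| -> V) (alpha : V -> S -> R) : Prop :=
  forall s, s \in attacked w theta alpha -> forall i : 'I_#|V|,
    let fl := Num.floor (th * (#|V|%:R)) in
    alpha (e i) s =
      if (i.+1%:Z <= fl) then ws s
      else if (i.+1%:Z == fl + 1) then (th * #|V|%:R - fl%:~R) * ws s
      else 0.

End Restaking.

(* Main.v *)
Require Import Defs.
From mathcomp Require Import all_boot all_order all_algebra.
From mathcomp Require Import reals.
Import Order.TTheory GRing.Theory Num.Theory.
Local Open Scope ring_scope.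
From mathcomp Require Import zify ring lra.
Lemma d_eq (R : realType) (x : R) (i : nat) : 0 <= x ->
  Num.min x (i.+1)%:R - Num.min x i%:R =
  if (i.+1%:Z <= Num.floor x) then 1
  else if (i.+1%:Z == Num.floor x + 1) then x - (Num.floor x)%:~R else 0.
Proof.
move=> x0.
have fle := floor_le x. have fgt := floorD1_gt x.
case: ifP => H1.
  have H1' : (i.+1)%:R <= x by move: H1; rewrite floor_ge_int.
  rewrite !min_r //; last by apply: le_trans H1'; rewrite ler_nat.
  by rewrite -natr1 addrAC subrr add0r.
case: ifP => H2.
  have Hi : Num.floor x = i%:Z by move/eqP: H2; lia.
  rewrite Hi in fle fgt *.
  rewrite min_l; last by apply: ltW; move: fgt; rewrite -natr1 intrD.
  by rewrite min_r.
have Hi : Num.floor x < i%:Z by move: H1 H2 => /negbT H1 /negbT H2; lia.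
rewrite floor_lt_int in Hi.
rewrite !min_l ?subrr //; apply: ltW => //.
by apply: lt_le_trans Hi _; rewrite ler_nat.
Qed.

Lemma key (R : realType) (V : finType) (sg W x : R) (L : V -> R) (d : nat -> R) :
  0 <= W -> (forall v, 0 <= L v <= W) -> x * W <= \sum_v L v ->
  (forall k, (k <= #|V|)%N -> \sum_(k <= i < #|V|) d i = x - Num.min x k%:R) ->
  \sum_(i < #|V|) Num.min sg (d i * W) <= \sum_v Num.min sg (L v).
Proof.
move=> W0 Lb Ls ds.
pose P := [pred v | sg <= L v].
set k := #|P|.
have km : (k <= #|V|)%N by apply: max_card.
rewrite (bigID P) /=.
have E1 : \sum_(v | P v) Num.min sg (L v) = sg *+ k.
  rewrite -sumr_const; apply: eq_big => // v; rewrite /P inE => Pv; by rewrite min_l.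
have E2 : \sum_(v | ~~ P v) Num.min sg (L v) = \sum_(v | ~~ P v) L v.
  apply: eq_bigr => v; rewrite /P inE -ltNge => Pv; by rewrite min_r // ltW.
have E3 : \sum_(v | P v) L v <= W *+ k.
  rewrite -sumr_const; apply: ler_sum => v _; by case/andP: (Lb v).
have E4 : 0 <= \sum_(v | ~~ P v) L v by apply: sumr_ge0 => v _; case/andP: (Lb v).
have E5 : \sum_v L v = \sum_(v | P v) L v + \sum_(v | ~~ P v) L v by rewrite (bigID P).
rewrite E1 E2.
rewrite -(big_mkord xpredT (fun i => Num.min sg (d i * W))) (big_cat_nat (leq0n k) km) /=.
have F1 : \sum_(0 <= i < k) Num.min sg (d i * W) <= sg *+ k.
  rewrite -[k in sg *+ k]subn0 -sumr_const_nat; apply: ler_sum => i _; by rewrite ge_min lexx.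
have F2 : \sum_(k <= i < #|V|) Num.min sg (d i * W) <= W * (x - Num.min x k%:R).
  rewrite -ds // mulr_sumr; apply: ler_sum => i _; rewrite mulrC; by rewrite ge_min lexx orbT.
apply: lerD => //; apply: le_trans F2 _.
case: (leP x k%:R) => xk.
  by rewrite subrr mulr0.
rewrite -mulr_natr in E3.
move: Ls; rewrite E5.
set a := \sum_(v | P v) L v in E3 *. set b := \sum_(v | ~~ P v) L v in E4 *.
move=> Ls. nra.
Qed.

Lemma d_props (R : realType) (x : R) (i : nat) : 0 <= x ->
  let d := Num.min x (i.+1)%:R - Num.min x i%:R in
  [/\ 0 <= d, d <= 1 & d <= x].
Proof.
move=> x0 /=.
have hi : (i.+1)%:R = i%:R + 1 :> R by rewrite -natr1.
have i0 : 0 <= i%:R :> R by [].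
case: (leP x i%:R) => h1; case: (leP x i.+1%:R) => h2; split; lra.
Qed.

Lemma dsum (R : realType) (x : R) (k m : nat) : (k <= m)%N ->
  \sum_(k <= i < m) (Num.min x (i.+1)%:R - Num.min x i%:R) =
  Num.min x m%:R - Num.min x k%:R.
Proof. move=> km; exact: (telescope_sumr (fun i => Num.min x i%:R) km). Qed.

Theorem mainTheorem12 (R : realType) (V S : finType)
    (sigma : V -> R) (w : V -> S -> R) (theta : S -> R) (pi : S -> R)
    (sg : R) (ws : S -> R) (th : R) :
  is_network sigma w theta pi ->
  symmetric_net sigma w theta sg ws th ->
  (exists alpha, is_attack w alpha /\ profitable sigma w theta pi alpha) ->
  exists alpha, is_attack w alpha /\ profitable sigma w theta pi alpha /\
    exists e : 'I_#|V| -> V, bijective e /\ consolidated w theta ws th e alpha.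
Proof.
move=> [Vpos sigpos wb thb pipos] [Hs Hw Ht] [alpha [Aatt [Tne Cle]]].
set m := #|V|.
set x := th * m%:R.
set T := attacked w theta alpha.
have [s0 s0T] : exists s0, s0 \in T by apply/set0Pn.
have [th0 th1] : 0 <= th /\ th <= 1 by rewrite -(Ht s0).
have [v0 _] : exists v0, v0 \in V by apply/card_gt0P.
have ws0 : forall s, 0 <= ws s by move=> s; rewrite -(Hw v0); case: (wb v0 s).
have x0 : 0 <= x by rewrite /x mulr_ge0.
have xm : x <= m%:R by rewrite /x -[X in _ <= X]mul1r ler_wpM2r.
pose d (i : nat) := Num.min x (i.+1)%:R - Num.min x i%:R.
have ds : forall k, (k <= m)%N -> \sum_(k <= i < m) d i = x - Num.min x k%:R.
  by move=> k km; rewrite dsum // (min_l xm).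
have dsum0 : \sum_(i < m) d i = x.
  by rewrite -(big_mkord xpredT d) ds // min_r ?subr0.
pose beta (v : V) (s : S) := if s \in T then d (enum_rank v) * ws s else 0.
have sumw : forall s, \sum_v w v s = m%:R * ws s.
  by move=> s; under eq_bigr do rewrite Hw; rewrite sumr_const mulr_natl.
have dp : forall i, [/\ 0 <= d i, d i <= 1 & d i <= x] by move=> i; exact: d_props.
have reidx : forall F : V -> R, \sum_v F v = \sum_(i < m) F (enum_val i).
  by move=> F; rewrite -(big_enum_val F); apply: eq_bigl.
have sumbeta : forall s, s \in T -> \sum_v beta v s = x * ws s.
  move=> s sT; rewrite reidx /beta sT.
  under eq_bigr do rewrite enum_valK.
  by rewrite -mulr_suml dsum0.
set T' := attacked w theta beta.
have TT' : T \subset T'.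
  apply/subsetP => s sT; rewrite inE sumbeta // sumw Ht /x.
  by rewrite mulrA.
have zero : forall s i, s \in T' -> s \notin T -> d i * ws s = 0.
  move=> s i; rewrite inE sumw Ht => H sT.
  have : \sum_v beta v s = 0 by apply: big1 => v _; rewrite /beta (negbTE sT).
  move=> E; rewrite E mulrA -/x in H.
  case: (dp i) => d0 d1 dx.
  apply/eqP; rewrite eq_le; apply/andP; split; last exact: mulr_ge0.
  apply: le_trans H; exact: ler_wpM2r.
have betaE : forall s (i : 'I_m), s \in T' -> beta (enum_val i) s = d i * ws s.
  move=> s i sT'; rewrite /beta enum_valK; case: ifP => // /negbT sT.
  by rewrite zero.
set W := \sum_(s in T) ws s.
have sb : forall v, \sum_(s in T') beta v s = d (enum_rank v) * W.
  move=> v; rewrite /W mulr_sumr /beta -big_mkcondr /=; apply: eq_bigl => s.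
  by case sT: (s \in T); rewrite ?andbT ?andbF //; apply: (subsetP TT').
exists beta; split.
  move=> v s; rewrite /beta Hw; case: ifP => _; last by split.
  case: (dp (enum_rank v)) => d0 d1 _; split; first exact: mulr_ge0.
  by rewrite -[X in _ <= X]mul1r; apply: ler_wpM2r.
split; last first.
  exists enum_val; split.
    by exists enum_rank; [exact: enum_valK | exact: enum_rankK].
  move=> s sT' i /=; rewrite betaE // /d d_eq //.
  case: ifP => _; first by rewrite mul1r.
  by case: ifP => _; rewrite ?mul0r.
split.
  by apply/set0Pn; exists s0; exact: (subsetP TT').
apply: le_trans (le_trans Cle _).
  rewrite /cost /vcost.
  under eq_bigr do rewrite Hs sb.
  under [X in _ <= X]eq_bigr do rewrite Hs.
  rewrite [X in X <= _]reidx; under [X in X <= _]eq_bigr => i _ do rewrite enum_valK.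
  apply: key => //.
  - by rewrite /W; apply: sumr_ge0.
  - move=> v; apply/andP; split; first by apply: sumr_ge0 => s _; case: (Aatt v s).
    by rewrite /W; apply: ler_sum => s _; rewrite -(Hw v); case: (Aatt v s).
  - rewrite exchange_big /= /W /x mulr_sumr; apply: ler_sum => s sT.
    move: sT; rewrite inE sumw Ht; apply: le_trans; by rewrite mulrA.
  - exact: ds.
rewrite /prize (bigID (mem T) (mem T')) /=.
have -> : \sum_(s in T' | s \in T) pi s = \sum_(s in T) pi s.
  apply: eq_bigl => s; case sT: (s \in T); rewrite ?andbT ?andbF //.
  exact: (subsetP TT').
by rewrite lerDl; apply: sumr_ge0 => s _; apply: ltW.
Qed.
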